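(* There is an absolute constant $C>0$ such that the following holds. Let $\varepsilon>0$, let $f:\mathbb R\to\mathbb R$ be $1$-smooth, and let $x_-<x_+$ satisfy $f'(x_-)\le-\varepsilon$ and $f(x_+)\ge f(x_-)$. Then BinarySearchIII$(x_-,x_+)$ terminates and outputs an $\varepsilon$-stationary point of $f$ using at most $C\bigl(1+\max\{0,\log\frac{x_+-x_-}{\varepsilon}\}\bigr)$ oracle queries.
   Context: $f:\mathbb R\to\mathbb R$ is $1$-smooth if it is continuously differentiable and $f'$ is $1$-Lipschitz; $x$ is an $\varepsilon$-stationary point if $|f'(x)|<\varepsilon$. The oracle returns $(f(x),f'(x))$ on query $x$; values at already-queried points (including $x_\pm$) are reused. Subroutines (a recursive call's output is returned unchanged): BinarySearch$(x_0,x_1)$: $m=(x_0+x_1)/2$; if $|f'(m)|<\varepsilon$ return $m$; if $f'(m)\le-\varepsilon$ return BinarySearch$(m,x_1)$; if $f'(m)>0$ return BinarySearch$(x_0,m)$. BinarySearchIII$(x_-,x_+)$: $m=(x_-+x_+)/2$; if $|f'(m)|<\varepsilon$ return $m$; else if $f'(m)>0$ return BinarySearch$(x_-,m)$; else if $f(m)\ge f(x_-)$ return BinarySearchIII$(x_-,m)$; else return BinarySearchIII$(m,x_+)$. *)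

(* Defs.v *)
From Stdlib Require Import Reals Lra.
Open Scope R_scope.

Definition one_smooth (f f' : R -> R) : Prop :=
  (forall x, derivable_pt_lim f x (f' x)) /\
  (forall x y, Rabs (f' x - f' y) <= Rabs (x - y)).

Definition eps_stationary (f' : R -> R) (eps x : R) : Prop := Rabs (f' x) < eps.

(* Big-step semantics of the algorithms.
   [BinarySearch eps f f' x0 x1 out k] : the call BinarySearch(x0,x1) terminates,
   returns [out], and makes [k] oracle queries (one fresh query per call, at the
   midpoint; the endpoints' values are reused). *)
Inductive BinarySearch (eps : R) (f f' : R -> R) : R -> R -> R -> nat -> Prop :=
| BS_stop x0 x1 :
    Rabs (f' ((x0 + x1) / 2)) < eps ->
    BinarySearch eps f f' x0 x1 ((x0 + x1) / 2) 1
| BS_right x0 x1 out k :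
    ~ (Rabs (f' ((x0 + x1) / 2)) < eps) ->
    f' ((x0 + x1) / 2) <= - eps ->
    BinarySearch eps f f' ((x0 + x1) / 2) x1 out k ->
    BinarySearch eps f f' x0 x1 out (S k)
| BS_left x0 x1 out k :
    ~ (Rabs (f' ((x0 + x1) / 2)) < eps) ->
    ~ (f' ((x0 + x1) / 2) <= - eps) ->
    f' ((x0 + x1) / 2) > 0 ->
    BinarySearch eps f f' x0 ((x0 + x1) / 2) out k ->
    BinarySearch eps f f' x0 x1 out (S k).

Inductive BinarySearchIII (eps : R) (f f' : R -> R) : R -> R -> R -> nat -> Prop :=
| BS3_stop xm xp :
    Rabs (f' ((xm + xp) / 2)) < eps ->
    BinarySearchIII eps f f' xm xp ((xm + xp) / 2) 1
| BS3_pos xm xp out k :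
    ~ (Rabs (f' ((xm + xp) / 2)) < eps) ->
    f' ((xm + xp) / 2) > 0 ->
    BinarySearch eps f f' xm ((xm + xp) / 2) out k ->
    BinarySearchIII eps f f' xm xp out (S k)
| BS3_left xm xp out k :
    ~ (Rabs (f' ((xm + xp) / 2)) < eps) ->
    ~ (f' ((xm + xp) / 2) > 0) ->
    f ((xm + xp) / 2) >= f xm ->
    BinarySearchIII eps f f' xm ((xm + xp) / 2) out k ->
    BinarySearchIII eps f f' xm xp out (S k)
| BS3_right xm xp out k :
    ~ (Rabs (f' ((xm + xp) / 2)) < eps) ->
    ~ (f' ((xm + xp) / 2) > 0) ->
    ~ (f ((xm + xp) / 2) >= f xm) ->
    BinarySearchIII eps f f' ((xm + xp) / 2) xp out k ->
    BinarySearchIII eps f f' xm xp out (S k).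

(* Main.v *)
Require Import Defs.
From Stdlib Require Import Reals Lra Lia.
Open Scope R_scope.

Lemma pow2_ge : forall m : nat, INR m + 1 <= 2 ^ m.
Proof. induction m; [simpl; lra|]. rewrite S_INR; simpl. assert (1 <= 2^m) by (apply pow_R1_Rle; lra). lra. Qed.

Lemma floor_log2 : forall m t, 1 <= t < 2 ^ m -> exists n, 2 ^ n <= t < 2 ^ (S n).
Proof.
  induction m; intros t Ht; simpl in Ht; [lra|].
  destruct (Rlt_dec t (2^m)) as [H|H].
  - apply IHm; lra.
  - exists m. simpl. lra.
Qed.

Lemma abs_cases : forall a e, ~ (Rabs a < e) -> a <= - e \/ a >= e.
Proof. intros a e H. unfold Rabs in H; destruct (Rcase_abs a); lra. Qed.

Section S.
Variables (eps : R) (f f' : R -> R).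
Hypothesis Heps : eps > 0.
Hypothesis Hs : one_smooth f f'.

Lemma BS_run : forall n x0 x1, x0 < x1 -> f' x0 <= - eps -> f' x1 >= eps ->
  x1 - x0 < eps * 2 ^ n ->
  exists out k, BinarySearch eps f f' x0 x1 out k /\ Rabs (f' out) < eps /\ (k <= n)%nat.
Proof.
  destruct Hs as [_ HL].
  induction n; intros x0 x1 H01 H0 H1 Hlen.
  - simpl in Hlen. specialize (HL x1 x0). rewrite Rabs_right in HL by lra.
    rewrite Rabs_right in HL by lra. lra.
  - simpl in Hlen. set (m := (x0 + x1) / 2).
    destruct (Rlt_dec (Rabs (f' m)) eps) as [Hst|Hst].
    + exists m, 1%nat. split; [apply BS_stop; exact Hst|]. split; [exact Hst|lia].
    + destruct (Rle_dec (f' m) (- eps)) as [Hr|Hr].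
      * destruct (IHn m x1) as [out [k [R1 [R2 R3]]]]; unfold m in *; try lra.
        exists out, (S k). split; [apply BS_right; assumption|]. split; [exact R2|lia].
      * destruct (abs_cases _ _ Hst) as [Hc|Hc]; [lra|].
        destruct (IHn x0 m) as [out [k [R1 [R2 R3]]]]; unfold m in *; try lra.
        exists out, (S k). split; [apply BS_left; try assumption; lra|]. split; [exact R2|lia].
Qed.

Lemma len_gt : forall x0 x1, x0 < x1 -> f' x0 <= - eps -> f x1 >= f x0 -> x1 - x0 > eps.
Proof.
  destruct Hs as [HD HL]. intros x0 x1 H01 H0 H1.
  destruct (MVT_cor2 f f' x0 x1 H01 (fun c _ => HD c)) as [c [Hc1 Hc2]].
  specialize (HL c x0). rewrite (Rabs_right (c - x0)) in HL by lra.
  assert (f' c - f' x0 <= c - x0) by (apply Rle_trans with (2:=HL); apply RRle_abs).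
  assert (0 <= f' c * (x1 - x0)) by lra.
  assert (0 <= f' c).
  { destruct (Rle_dec 0 (f' c)); auto. assert (f' c * (x1 - x0) < 0); [|lra].
    apply Rmult_neg_pos ; lra. }
  lra.
Qed.

Lemma BS3_run : forall n x0 x1, x0 < x1 -> f' x0 <= - eps -> f x1 >= f x0 ->
  x1 - x0 < eps * 2 ^ n ->
  exists out k, BinarySearchIII eps f f' x0 x1 out k /\ Rabs (f' out) < eps /\ (k <= n)%nat.
Proof.
  induction n; intros x0 x1 H01 H0 H1 Hlen.
  - simpl in Hlen. pose proof (len_gt x0 x1 H01 H0 H1). lra.
  - simpl in Hlen. set (m := (x0 + x1) / 2).
    destruct (Rlt_dec (Rabs (f' m)) eps) as [Hst|Hst].
    + exists m, 1%nat. split; [apply BS3_stop; exact Hst|]. split; [exact Hst|lia].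
    + destruct (Rgt_dec (f' m) 0) as [Hp|Hp].
      * destruct (abs_cases _ _ Hst) as [Hc|Hc]; [lra|].
        destruct (BS_run n x0 m) as [out [k [R1 [R2 R3]]]]; unfold m in *; try lra.
        exists out, (S k). split; [apply BS3_pos; assumption|]. split; [exact R2|lia].
      * destruct (abs_cases _ _ Hst) as [Hc|Hc]; [|lra].
        destruct (Rge_dec (f m) (f x0)) as [Hf|Hf].
        -- destruct (IHn x0 m) as [out [k [R1 [R2 R3]]]]; unfold m in *; try lra.
           exists out, (S k). split; [apply BS3_left; assumption|]. split; [exact R2|lia].
        -- destruct (IHn m x1) as [out [k [R1 [R2 R3]]]]; unfold m in *; try lra.
           exists out, (S k). split; [apply BS3_right; assumption|]. split; [exact R2|lia].
Qed.

End S.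

Theorem lemmaA5 :
  exists C : R, C > 0 /\
    forall (eps : R) (f f' : R -> R) (xm xp : R),
      eps > 0 ->
      one_smooth f f' ->
      xm < xp ->
      f' xm <= - eps ->
      f xp >= f xm ->
      exists (out : R) (k : nat),
        BinarySearchIII eps f f' xm xp out k /\
        eps_stationary f' eps out /\
        INR k <= C * (1 + Rmax 0 (ln ((xp - xm) / eps))).
Proof.
  exists 2. split; [lra|].
  intros eps f f' xm xp He Hs H01 H0 H1.
  pose proof (len_gt eps f f' Hs xm xp H01 H0 H1) as HL.
  set (t := (xp - xm) / eps).
  assert (Ht : 1 < t). { unfold t. apply (Rmult_lt_reg_r eps); [lra|].
    field_simplify; lra. }
  destruct (INR_unbounded t) as [M HM].
  pose proof (pow2_ge M).
  destruct (floor_log2 M t) as [n [Hn1 Hn2]]; [lra|].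
  destruct (BS3_run eps f f' He Hs (S n) xm xp H01 H0 H1) as [out [k [R1 [R2 R3]]]].
  { unfold t in Hn2. apply (Rmult_lt_compat_r eps) in Hn2; [|lra].
    field_simplify in Hn2; lra. }
  exists out, k. split; [exact R1|]. split; [exact R2|].
  assert (Hln : INR n * ln 2 <= ln t).
  { rewrite <- ln_pow by lra. destruct (Req_dec (2^n) t) as [E|E]; [rewrite E; lra|].
    left. apply ln_increasing; [apply pow_lt; lra|lra]. }
  pose proof ln_lt_2. pose proof (pos_INR n).
  apply le_INR in R3. rewrite S_INR in R3.
  assert (ln t <= Rmax 0 (ln t)) by apply Rmax_r.
  fold t. nra.
Qed.
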